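(* Assume $\sigma_1(x)=\tfrac12\sigma_1''(0)\,x(x-a_1)$ with $\sigma_1''(0)\ne0$ and real $a_1>0$, and $\frac{\tau'(0)}{\frac12\sigma_1''(0)}=-\frac{1}{1-q^{-1}}$, so that $\sigma_2(x)=\sigma_2'(0)x$ with $\sigma_2'(0)=q\big[(1-q^{-1})\tau(0)-\tfrac12\sigma_1''(0)a_1\big]\ne0$. Let $y_0=q^{-1}\Big[1-\frac{(1-q^{-1})}{a_1}\frac{\tau(0)}{\frac12\sigma_1''(0)}\Big]$ and assume $0<qy_0<1$. Put $b=a_1$ and $$\rho(x)=|x|^{\alpha}(qx/b;q)_\infty,\qquad q^{\alpha}=-\frac{q^{-2}\sigma_2'(0)}{\tfrac12\sigma_1''(0)b}.$$ Then there exist polynomials $P_n$, $n\in\mathbb{N}_0$, with $P_n$ of degree $n$ a solution of the q-EHT with $\lambda=\lambda_n$, and nonzero constants $d_n^2$, such that for all $m,n\in\mathbb{N}_0$ $$\int_0^{b}P_n(x)P_m(x)\rho(x)\,d_qx=d_n^2\delta_{mn},$$ i.e. orthogonality with respect to $\rho$ supported on $\{q^kb\}_{k\in\mathbb{N}_0}$.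
   Context: Throughout $0<q<1$. For a function $y$ and $\zeta\in\{q,q^{-1}\}$, $D_\zeta y(x)=\frac{y(x)-y(\zeta x)}{(1-\zeta)x}$ for $x\ne0$ and $D_\zeta y(0)=y'(0)$; $[n]_q=\frac{1-q^n}{1-q}$. Let $\sigma_1$ be a real polynomial of degree at most two, $\tau(x)=\tau'(0)x+\tau(0)$ a real polynomial with $\tau'(0)\ne0$, and $\sigma_2(x):=q[\sigma_1(x)+(1-q^{-1})x\tau(x)]$. The q-EHT with parameter $n$ is $\sigma_1(x)D_{q^{-1}}D_qy(x)+\tau(x)D_qy(x)+\lambda_ny(x)=0$, $\lambda_n=-[n]_q\big(\tau'(0)+\tfrac12[n-1]_{q^{-1}}\sigma_1''(0)\big)$. $(\beta;q)_\infty=\prod_{k\ge0}(1-\beta q^k)$. For $q^\alpha=c$ ($c\ne0$), $\alpha$ is any complex number with $e^{\alpha\ln q}=c$ and $|x|^\alpha:=e^{\alpha\ln|x|}$. For $b>0$, $\int_0^b f(x)\,d_qx=(1-q)b\sum_{j\ge0}q^jf(q^jb)$. *)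

(* Defs.v *)
From Stdlib Require Import Reals Lra.
From Coquelicot Require Import Coquelicot.
Open Scope R_scope.

Definition Dq (zeta : R) (y : R -> R) (x : R) : R :=
  if Req_EM_T x 0 then Derive y 0 else (y x - y (zeta * x)) / ((1 - zeta) * x).

Definition qnum (q : R) (k : Z) : R := (1 - powerRZ q k) / (1 - q).

(* eigenvalue lambda_n of the q-EHT; s2 = sigma_1''(0), t1 = tau'(0). *)
Definition lambda_n (q s2 t1 : R) (n : nat) : R :=
  - qnum q (Z.of_nat n) * (t1 + / 2 * qnum (/ q) (Z.of_nat n - 1) * s2).

Definition qEHT (q : R) (sigma1 tau : R -> R) (lam : R) (y : R -> R) : Prop :=
  forall x : R, sigma1 x * Dq (/ q) (Dq q y) x + tau x * Dq q y x + lam * y x = 0.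

Definition is_poly_deg (y : R -> R) (n : nat) : Prop :=
  exists a : nat -> R, a n <> 0 /\ forall x, y x = sum_f_R0 (fun k => a k * x ^ k) n.

Fixpoint qpoch_part (beta q : R) (n : nat) : R :=
  match n with
  | O => 1
  | S m => qpoch_part beta q m * (1 - beta * q ^ m)
  end.
Definition qpoch_inf (beta q : R) : R := real (Lim_seq (qpoch_part beta q)).

Definition cexp (z : C) : C := (exp (fst z) * cos (snd z), exp (fst z) * sin (snd z)).

Definition cpow_abs (x : R) (alpha : C) : C := cexp (alpha * RtoC (ln (Rabs x)))%C.

(* Jackson q-integral: int_0^b f(x) d_q x = (1-q) b sum_{j>=0} q^j f(q^j b) ;
   qint_is q b f l  means the series converges and the integral equals l. *)
Definition qint_is (q b : R) (f : R -> C) (l : C) : Prop :=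
  exists s : C, is_series (fun j : nat => (RtoC (q ^ j) * f ((q ^ j * b)%R))%C) s
                /\ l = (RtoC ((1 - q) * b) * s)%C.

(* Main.v *)
Require Import Defs.
From Stdlib Require Import Reals Lra Lia Classical.
From Coquelicot Require Import Coquelicot.
Open Scope R_scope.



Definition pev (c : nat -> R) (n : nat) (x : R) : R := sum_f_R0 (fun k => c k * x ^ k) n.

Lemma sum_diff_div (u v : nat -> R) (d : R) n :
  (sum_f_R0 u n - sum_f_R0 v n) / d = sum_f_R0 (fun k => (u k - v k) / d) n.
Proof. induction n; simpl. reflexivity. rewrite <- IHn. unfold Rdiv. ring. Qed.

Lemma sum_lin3 (u v w : nat -> R) (A B C : R) n :
  A * sum_f_R0 u n + B * sum_f_R0 v n + C * sum_f_R0 w n =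
  sum_f_R0 (fun k => A * u k + B * v k + C * w k) n.
Proof. induction n; simpl. ring. rewrite <- IHn. ring. Qed.

Lemma Dq_pev (z : R) c n x : x <> 0 ->
  Dq z (pev c n) x = sum_f_R0 (fun k => c k * ((x ^ k - (z * x) ^ k) / ((1 - z) * x))) n.
Proof.
  intro Hx. unfold Dq. destruct (Req_EM_T x 0) as [E|_]. contradiction.
  unfold pev. rewrite sum_diff_div. apply sum_eq. intros i _. unfold Rdiv. ring.
Qed.

Lemma is_derive_pev c n x :
  is_derive (pev c n) x (sum_f_R0 (fun k => c k * (INR k * x ^ pred k)) n).
Proof.
  induction n.
  - unfold pev; simpl. apply (is_derive_ext (fun _ => c 0%nat)).
    intro t. simpl. ring.
    auto_derive. exact I. ring.
  - apply (is_derive_ext (fun t => pev c n t + c (S n) * t ^ (S n))).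
    { intro t. unfold pev. simpl. reflexivity. }
    rewrite tech5.
    apply (is_derive_plus (pev c n) (fun t => c (S n) * t ^ S n)). exact IHn.
    apply (is_derive_scal (fun t => t ^ S n)).
    replace (INR (S n) * x ^ pred (S n)) with (INR (S n) * 1 * (fun t => t) x ^ pred (S n)) by (simpl; ring).
    apply (is_derive_pow (fun t => t)). exact (@is_derive_id R_AbsRing x).
Qed.

Lemma telesc_aux (t nu : nat -> R) m :
  (forall k, (k <= m)%nat -> t k = nu k - nu (S k)) -> sum_f_R0 t m = nu 0%nat - nu (S m).
Proof.
  induction m; intro H; simpl.
  - apply H. lia.
  - rewrite IHm by (intros; apply H; lia). rewrite (H (S m)) by lia. ring.
Qed.

Lemma telesc (t nu : nat -> R) n :
  (forall k, (k < n)%nat -> t k = nu k - nu (S k)) -> t n = nu n -> sum_f_R0 t n = nu 0%nat.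
Proof.
  intros H Hn. destruct n. simpl. exact Hn.
  rewrite tech5. rewrite (telesc_aux t nu n) by (intros; apply H; lia). rewrite Hn. ring.
Qed.
Definition mu (q s2 a1 t0 : R) (k : nat) : R :=
  qnum q (Z.of_nat k) * (t0 - / 2 * s2 * a1 * qnum (/ q) (Z.of_nat k - 1)).

Lemma qnum_nat q k : qnum q (Z.of_nat k) = (1 - q ^ k) / (1 - q).
Proof. unfold qnum. rewrite <- pow_powerRZ. reflexivity. Qed.

Lemma qnum_pred q k : qnum q (Z.of_nat (S k) - 1) = (1 - q ^ k) / (1 - q).
Proof. replace (Z.of_nat (S k) - 1)%Z with (Z.of_nat k) by lia. apply qnum_nat. Qed.

Lemma lam0 q s2 t1 : lambda_n q s2 t1 0 = 0.
Proof. unfold lambda_n. rewrite qnum_nat. simpl. unfold Rdiv. ring. Qed.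

Lemma mu0 q s2 a1 t0 : mu q s2 a1 t0 0 = 0.
Proof. unfold mu. rewrite qnum_nat. simpl. unfold Rdiv. ring. Qed.

Lemma mu1 q s2 a1 t0 : 0 < q < 1 -> mu q s2 a1 t0 1 = t0.
Proof. intro Hq. unfold mu. rewrite qnum_pred, qnum_nat. simpl. field. repeat split; lra.
Qed.

Lemma monomial_id q s2 a1 t1 t0 lamn x k : 0 < q < 1 -> x <> 0 ->
  / 2 * s2 * x * (x - a1) *
   (((x ^ k - (q * x) ^ k) / ((1 - q) * x) -
     ((/ q * x) ^ k - (q * (/ q * x)) ^ k) / ((1 - q) * (/ q * x))) / ((1 - / q) * x))
  + (t1 * x + t0) * ((x ^ k - (q * x) ^ k) / ((1 - q) * x)) + lamn * x ^ k
  = (lamn - lambda_n q s2 t1 k) * x ^ k + mu q s2 a1 t0 k * x ^ pred k.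
Proof.
  intros Hq Hx.
  replace (q * (/ q * x)) with x by (field; lra).
  destruct k as [|k].
  - rewrite lam0, mu0. simpl. field. repeat split; try lra; auto; try (apply Rinv_neq_0_compat; lra).
  - unfold lambda_n, mu. rewrite qnum_pred, qnum_nat.
    rewrite !Rpow_mult_distr. rewrite pow_inv.
    simpl pred. simpl pow. rewrite pow_inv.
    assert (HQ : q ^ k <> 0) by (apply pow_nonzero; lra).
    assert (1 - / q <> 0).
    { intro H. assert (/ q = 1) by lra. assert (q = 1). rewrite <- (Rinv_inv q). rewrite H0. apply Rinv_1. lra. }
    field. repeat split; try lra; auto.
Qed.

Fixpoint cc (q s2 a1 t1 t0 : R) (n d : nat) : R :=
  match d with
  | O => 1
  | S d' => - mu q s2 a1 t0 (n - d') * cc q s2 a1 t1 t0 n d'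
            / (lambda_n q s2 t1 n - lambda_n q s2 t1 (n - S d'))
  end.
Definition coef q s2 a1 t1 t0 n k := cc q s2 a1 t1 t0 n (n - k).

Lemma coef_top q s2 a1 t1 t0 n : coef q s2 a1 t1 t0 n n = 1.
Proof. unfold coef. rewrite Nat.sub_diag. reflexivity. Qed.

Lemma coef_rec q s2 a1 t1 t0 n k : (k < n)%nat ->
  lambda_n q s2 t1 n <> lambda_n q s2 t1 k ->
  (lambda_n q s2 t1 n - lambda_n q s2 t1 k) * coef q s2 a1 t1 t0 n k
  = - mu q s2 a1 t0 (S k) * coef q s2 a1 t1 t0 n (S k).
Proof.
  intros Hk Hl. unfold coef.
  replace (n - k)%nat with (S (n - S k)) by lia. simpl cc.
  replace (n - (n - S k))%nat with (S k) by lia.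
  replace (n - S (n - S k))%nat with k by lia.
  field. intro H. apply Hl. lra.
Qed.

Lemma Dq_outer z g x : x <> 0 -> Dq z g x = (g x - g (z * x)) / ((1 - z) * x).
Proof. intro Hx. unfold Dq. destruct (Req_EM_T x 0). contradiction. reflexivity. Qed.

Lemma sum_lin2 (u v : nat -> R) (A B : R) n :
  A * sum_f_R0 u n + B * sum_f_R0 v n = sum_f_R0 (fun k => A * u k + B * v k) n.
Proof. induction n; simpl. ring. rewrite <- IHn. ring. Qed.

Theorem P_qEHT q s2 a1 t1 t0 n : 0 < q < 1 ->
  (forall k, (k < n)%nat -> lambda_n q s2 t1 n <> lambda_n q s2 t1 k) ->
  qEHT q (fun x => / 2 * s2 * x * (x - a1)) (fun x => t1 * x + t0)
       (lambda_n q s2 t1 n) (pev (coef q s2 a1 t1 t0 n) n).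
Proof.
  intros Hq Hl x.
  set (c := coef q s2 a1 t1 t0 n).
  set (lam := lambda_n q s2 t1).
  set (m := mu q s2 a1 t0).
  assert (Htel : forall x, sum_f_R0 (fun k => c k * ((lam n - lam k) * x ^ k + m k * x ^ pred k)) n = 0).
  { intro y. rewrite (telesc _ (fun k => c k * m k * y ^ pred k)).
    - unfold m. rewrite mu0. ring.
    - intros k Hk. pose proof (coef_rec q s2 a1 t1 t0 n k Hk (Hl k Hk)) as E.
      fold c lam m in E.
      replace (c k * ((lam n - lam k) * y ^ k + m k * y ^ pred k))
        with ((lam n - lam k) * c k * y ^ k + c k * m k * y ^ pred k) by ring.
      rewrite E. simpl pred. ring.
    - replace (lam n - lam n) with 0 by ring. ring. }
  cbv beta. destruct (Req_EM_T x 0) as [Hx|Hx].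
  - subst x.
    replace (/ 2 * s2 * 0 * (0 - a1)) with 0 by ring. rewrite Rmult_0_l, Rplus_0_l.
    unfold Dq. destruct (Req_EM_T 0 0) as [_|H]; [|exfalso; apply H; reflexivity].
    rewrite (is_derive_unique _ _ _ (is_derive_pev c n 0)).
    unfold pev. etransitivity; [| apply (Htel 0)].
    rewrite sum_lin2. apply sum_eq. intros k _.
    destruct k as [|[|k]].
    + unfold lam. rewrite lam0. simpl. unfold m. rewrite mu0. ring.
    + unfold m. rewrite mu1 by exact Hq. simpl. ring.
    + simpl. ring.
  - rewrite Dq_outer by exact Hx.
    assert (Hx' : / q * x <> 0) by (apply Rmult_integral_contrapositive; split; [apply Rinv_neq_0_compat; lra | exact Hx]).
    rewrite !Dq_pev by assumption.
    etransitivity; [| apply (Htel x)].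
    rewrite sum_diff_div. unfold pev. rewrite sum_lin3. apply sum_eq. intros k _.
    unfold lam, m. rewrite <- (monomial_id q s2 a1 t1 t0 (lambda_n q s2 t1 n) x k Hq Hx). unfold Rdiv. ring.
Qed.

Lemma lam_formula q s2 t1 k : 0 < q < 1 -> t1 = / 2 * s2 * q / (1 - q) ->
  lambda_n q s2 t1 k = / 2 * s2 * q ^ 2 / (1 - q) ^ 2 * (1 - / q ^ k).
Proof.
  intros Hq Ht. destruct k as [|k].
  - rewrite lam0. simpl. rewrite Rinv_1. ring.
  - unfold lambda_n. rewrite qnum_pred, qnum_nat, pow_inv. subst t1.
    assert (HQ : q ^ k <> 0) by (apply pow_nonzero; lra).
    simpl pow. field. repeat split; try lra; auto.
Qed.

Lemma pow_strict q n m : 0 < q < 1 -> (n < m)%nat -> q ^ m < q ^ n.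
Proof.
  intros Hq Hnm. replace m with (n + (m - n))%nat by lia. rewrite pow_add.
  assert (0 < q ^ n) by (apply pow_lt; lra).
  assert (q ^ (m - n) < 1) by (apply pow_lt_1_compat; [lra | lia]).
  nra.
Qed.

Lemma lam_inj q s2 t1 k n : 0 < q < 1 -> s2 <> 0 -> t1 = / 2 * s2 * q / (1 - q) ->
  lambda_n q s2 t1 k = lambda_n q s2 t1 n -> k = n.
Proof.
  intros Hq Hs Ht E. rewrite !(lam_formula q s2 t1) in E by assumption.
  assert (Hc : / 2 * s2 * q ^ 2 / (1 - q) ^ 2 <> 0).
  { assert (q ^ 2 <> 0) by (apply pow_nonzero; lra).
    assert ((1 - q) ^ 2 <> 0) by (apply pow_nonzero; lra).
    unfold Rdiv. repeat apply Rmult_integral_contrapositive_currified; auto;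
      try (apply Rinv_neq_0_compat; auto); lra. }
  apply Rmult_eq_reg_l in E; [|exact Hc].
  assert (E2 : / q ^ k = / q ^ n) by lra.
  assert (E3 : q ^ k = q ^ n).
  { rewrite <- (Rinv_inv (q ^ k)), <- (Rinv_inv (q ^ n)), E2. reflexivity. }
  destruct (Nat.lt_trichotomy k n) as [H|[H|H]]; auto.
  - pose proof (pow_strict q k n Hq H). lra.
  - pose proof (pow_strict q n k Hq H). lra.
Qed.

Lemma qp_shift b q n : qpoch_part b q (S n) = (1 - b) * qpoch_part (b * q) q n.
Proof.
  induction n.
  - simpl. ring.
  - change (qpoch_part b q (S (S n))) with (qpoch_part b q (S n) * (1 - b * q ^ S n)).
    rewrite IHn. simpl. ring.
Qed.

Lemma pow_01 q n : 0 <= q <= 1 -> 0 <= q ^ n <= 1.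
Proof. intro H. induction n; simpl. lra. split; nra. Qed.

Lemma qp_bounds b q n : 0 < q < 1 -> 0 <= b <= 1 ->
  (0 <= qpoch_part b q n <= 1) /\ qpoch_part b q (S n) <= qpoch_part b q n.
Proof.
  intros Hq Hb.
  assert (Hs : forall n, 0 <= b * q ^ n <= 1).
  { intro k. pose proof (pow_01 q k ltac:(lra)). split; nra. }
  induction n.
  - simpl. specialize (Hs 0%nat). simpl in Hs. split; nra.
  - destruct IHn as [[H0 H1] H2].
    change (qpoch_part b q (S (S n))) with (qpoch_part b q (S n) * (1 - b * q ^ S n)).
    assert (E : qpoch_part b q (S n) = qpoch_part b q n * (1 - b * q ^ n)) by reflexivity.
    pose proof (Hs n). pose proof (Hs (S n)).
    assert (0 <= qpoch_part b q (S n) <= 1) by (rewrite E; split; nra).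
    split. auto. nra.
Qed.

Lemma qp_lower b q n : 0 < q < 1 -> 0 <= b <= 1 ->
  1 - b * (1 - q ^ n) / (1 - q) <= qpoch_part b q n.
Proof.
  intros Hq Hb. induction n.
  - simpl. unfold Rdiv. replace (1 - 1) with 0 by ring. lra.
  - change (qpoch_part b q (S n)) with (qpoch_part b q n * (1 - b * q ^ n)).
    destruct (qp_bounds b q n Hq Hb) as [[H0 H1] _].
    pose proof (pow_01 q n ltac:(lra)).
    assert (E : 1 - b * (1 - q ^ S n) / (1 - q) = 1 - b * (1 - q ^ n) / (1 - q) - b * q ^ n)
      by (simpl; field; lra).
    rewrite E. assert (0 <= b * q ^ n) by nra. nra.
Qed.

Lemma qp_lim b q : 0 < q < 1 -> 0 <= b <= 1 ->
  is_lim_seq (qpoch_part b q) (qpoch_inf b q).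
Proof.
  intros Hq Hb.
  assert (Hex : ex_finite_lim_seq (qpoch_part b q)).
  { apply (ex_finite_lim_seq_decr _ 0).
    - intro n. apply (qp_bounds b q n Hq Hb).
    - intro n. apply (qp_bounds b q n Hq Hb). }
  pose proof (Lim_seq_correct' _ Hex) as H.
  apply ex_finite_lim_seq_correct in Hex. destruct Hex as [_ Hf].
  unfold qpoch_inf. first [exact H | rewrite Hf; exact H | rewrite <- Hf in H; exact H].
Qed.

Lemma qp_inf_bounds b q : 0 < q < 1 -> 0 <= b <= 1 ->
  0 <= qpoch_inf b q <= 1 /\ 1 - b / (1 - q) <= qpoch_inf b q.
Proof.
  intros Hq Hb. pose proof (qp_lim b q Hq Hb) as H.
  split; [split|].
  - apply (is_lim_seq_le (fun _ => 0) (qpoch_part b q) 0 (qpoch_inf b q)); auto.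
    intro n. apply (qp_bounds b q n Hq Hb). apply is_lim_seq_const.
  - apply (is_lim_seq_le (qpoch_part b q) (fun _ => 1) (qpoch_inf b q) 1); auto.
    intro n. apply (qp_bounds b q n Hq Hb). apply is_lim_seq_const.
  - apply (is_lim_seq_le (fun _ => 1 - b / (1 - q)) (qpoch_part b q) (1 - b / (1 - q)) (qpoch_inf b q)); auto.
    + intro n. eapply Rle_trans; [| apply (qp_lower b q n Hq Hb)].
      pose proof (pow_01 q n ltac:(lra)).
      assert (b * q ^ n / (1 - q) >= 0).
      { apply Rle_ge. apply Rmult_le_pos. nra. left. apply Rinv_0_lt_compat. lra. }
      assert (E : b * (1 - q ^ n) / (1 - q) = b / (1 - q) - b * q ^ n / (1 - q)) by (field; lra).
      rewrite E. lra.
    + apply is_lim_seq_const.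
Qed.

Lemma qp_inf_rec b q : 0 < q < 1 -> 0 <= b <= 1 ->
  qpoch_inf b q = (1 - b) * qpoch_inf (b * q) q.
Proof.
  intros Hq Hb.
  assert (Hb' : 0 <= b * q <= 1) by nra.
  pose proof (qp_lim b q Hq Hb) as H1.
  apply is_lim_seq_incr_1 in H1.
  pose proof (qp_lim (b * q) q Hq Hb') as H2.
  apply (is_lim_seq_scal_l _ (1 - b)) in H2.
  assert (H3 : is_lim_seq (fun n => qpoch_part b q (S n)) ((1 - b) * qpoch_inf (b * q) q)).
  { eapply is_lim_seq_ext; [| exact H2]. intro n. rewrite qp_shift. reflexivity. }
  apply is_lim_seq_unique in H1. apply is_lim_seq_unique in H3.
  rewrite H1 in H3. injection H3. auto.
Qed.





Lemma sum_bounded (u : nat -> nat -> R) n :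
  (forall k, (k <= n)%nat -> exists M, forall j, Rabs (u k j) <= M) ->
  exists M, forall j, Rabs (sum_f_R0 (fun k => u k j) n) <= M.
Proof.
  induction n; intro H.
  - destruct (H 0%nat (le_n 0)) as [M HM]. exists M. intro j. simpl. apply HM.
  - destruct IHn as [M1 H1]. { intros k Hk. apply H. lia. }
    destruct (H (S n) (le_n _)) as [M2 H2]. exists (M1 + M2). intro j.
    simpl. eapply Rle_trans. apply Rabs_triang. apply Rplus_le_compat; auto.
Qed.

Lemma pev_bounded c n B (z : nat -> R) : (forall j, Rabs (z j) <= B) ->
  exists M, forall j, Rabs (pev c n (z j)) <= M.
Proof.
  intro Hz. unfold pev. apply (sum_bounded (fun k j => c k * z j ^ k)).
  intros k _. exists (Rabs (c k) * B ^ k). intro j.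
  rewrite Rabs_mult, <- RPow_abs. apply Rmult_le_compat_l. apply Rabs_pos.
  apply pow_incr. split. apply Rabs_pos. apply Hz.
Qed.

Lemma Dq_bounded q c n B (z : nat -> R) : 0 < q < 1 ->
  (forall j, z j <> 0) -> (forall j, Rabs (z j) <= B) ->
  exists M, forall j, Rabs (Dq q (pev c n) (z j)) <= M.
Proof.
  intros Hq Hz0 Hz.
  assert (E : forall j, Dq q (pev c n) (z j) =
     sum_f_R0 (fun k => c k * ((z j ^ k - (q * z j) ^ k) / ((1 - q) * z j))) n)
    by (intro j; apply Dq_pev; auto).
  destruct (sum_bounded (fun k j => c k * ((z j ^ k - (q * z j) ^ k) / ((1 - q) * z j))) n)
    as [M HM].
  2:{ exists M. intro j. rewrite E. apply HM. }
  intros k _. destruct k as [|k].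
  - exists 0. intro j. simpl. replace (c 0%nat * ((1 - 1) / ((1 - q) * z j))) with 0.
    rewrite Rabs_R0. lra. unfold Rdiv. ring.
  - exists (Rabs (c (S k)) * B ^ k * Rabs ((1 - q ^ S k) / (1 - q))). intro j.
    assert (Hzj := Hz0 j).
    replace (c (S k) * ((z j ^ S k - (q * z j) ^ S k) / ((1 - q) * z j)))
      with (c (S k) * z j ^ k * ((1 - q ^ S k) / (1 - q))).
    2:{ rewrite Rpow_mult_distr. simpl. field. split; auto. lra. }
    rewrite !Rabs_mult. apply Rmult_le_compat_r. apply Rabs_pos.
    apply Rmult_le_compat_l. apply Rabs_pos. rewrite <- RPow_abs.
    apply pow_incr. split. apply Rabs_pos. apply Hz.
Qed.

Lemma pev_shift c n x : pev c (S n) x = c 0%nat + x * pev (fun k => c (S k)) n x.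
Proof.
  unfold pev. induction n.
  - simpl. ring.
  - rewrite tech5, IHn. rewrite (tech5 (fun k => c (S k) * x ^ k)). simpl. ring.
Qed.

Lemma root_lemma q : 0 < q < 1 -> forall n c B, 0 < B ->
  (forall j, pev c n (q ^ j * B) = 0) -> forall k, (k <= n)%nat -> c k = 0.
Proof.
  intros Hq n. induction n; intros c B HB H k Hk.
  - assert (k = 0%nat) by lia. subst k. specialize (H 0%nat). unfold pev in H. simpl in H. lra.
  - set (c' := fun k => c (S k)).
    assert (Hxb : forall j, Rabs (q ^ j * B) <= B).
    { intro j. rewrite Rabs_pos_eq. pose proof (pow_01 q j). 
      assert (0 <= q ^ j <= 1). { clear -Hq. induction j; simpl; split; nra. } nra.
      apply Rmult_le_pos. apply pow_le; lra. lra. }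
    destruct (pev_bounded c' n B (fun j => q ^ j * B) Hxb) as [M HM].
    assert (Hc0 : c 0%nat = 0).
    { assert (Hle : forall j, Rabs (c 0%nat) <= B * M * q ^ j).
      { intro j. specialize (H j). rewrite pev_shift in H. fold c' in H.
        replace (c 0%nat) with (- (q ^ j * B * pev c' n (q ^ j * B))) by lra.
        rewrite Rabs_Ropp, Rabs_mult, Rabs_pos_eq.
        2:{ apply Rmult_le_pos. apply pow_le; lra. lra. }
        specialize (HM j). cbv beta in HM. assert (0 <= q ^ j) by (apply pow_le; lra).
        assert (0 <= q ^ j * B) by nra. nra. }
      assert (Hlim : is_lim_seq (fun j => B * M * q ^ j) 0).
      { assert (G : is_lim_seq (fun j => q ^ j) 0) by (apply is_lim_seq_geom; rewrite Rabs_pos_eq; lra).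
        apply (is_lim_seq_scal_l _ (B * M)) in G. simpl in G.
        replace (B * M * 0) with 0 in G by ring. exact G. }
      pose proof (is_lim_seq_le (fun _ => Rabs (c 0%nat)) _ (Rabs (c 0%nat)) 0 Hle
                   (is_lim_seq_const _) Hlim) as HH.
      simpl in HH. destruct (Req_dec (c 0%nat) 0) as [|Hn]; auto.
      pose proof (Rabs_pos_lt _ Hn). lra. }
    destruct k as [|k]. exact Hc0.
    apply (IHn c' B HB); [| lia].
    intro j. specialize (H j). rewrite pev_shift in H. fold c' in H. rewrite Hc0 in H.
    assert (q ^ j * B <> 0).
    { apply Rgt_not_eq. apply Rmult_lt_0_compat. apply pow_lt; lra. lra. }
    rewrite Rplus_0_l in H. apply Rmult_integral in H. destruct H as [H|H]. lra. exact H.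
Qed.

Lemma orth_partial (f g h k w e : nat -> R) (al lf lg : R) :
  lf * w 0%nat * f 0%nat = - al * w 0%nat * h 0%nat ->
  lg * w 0%nat * g 0%nat = - al * w 0%nat * k 0%nat ->
  (forall j, lf * w (S j) * f (S j) = al * w j * h j - al * w (S j) * h (S j)) ->
  (forall j, lg * w (S j) * g (S j) = al * w j * k j - al * w (S j) * k (S j)) ->
  (forall j, f (S j) = f j - e j * h j) -> (forall j, g (S j) = g j - e j * k j) ->
  forall N, (lf - lg) * sum_f_R0 (fun j => w j * f j * g j) N
            = - al * w N * (h N * g N - k N * f N).
Proof.
  intros H0f H0g Hf Hg Df Dg N. induction N.
  - simpl. replace ((lf - lg) * (w 0%nat * f 0%nat * g 0%nat))
      with (lf * w 0%nat * f 0%nat * g 0%nat - lg * w 0%nat * g 0%nat * f 0%nat) by ring.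
    rewrite H0f, H0g. ring.
  - rewrite tech5, Rmult_plus_distr_l, IHN.
    replace ((lf - lg) * (w (S N) * f (S N) * g (S N)))
      with (lf * w (S N) * f (S N) * g (S N) - lg * w (S N) * g (S N) * f (S N)) by ring.
    rewrite Hf, Hg. rewrite (Df N), (Dg N). ring.
Qed.


Lemma cexp_plus z w : cexp (z + w)%C = (cexp z * cexp w)%C.
Proof.
  destruct z as [a b], w as [c d]. unfold cexp, Cplus, Cmult. simpl.
  rewrite exp_plus, cos_plus, sin_plus. f_equal; ring.
Qed.

Lemma cexp_neq0 z : cexp z <> RtoC 0.
Proof.
  destruct z as [a b]. unfold cexp, RtoC. simpl. intro E. injection E as E1 E2.
  pose proof (exp_pos a). pose proof (sin2_cos2 b). unfold Rsqr in *.
  apply Rmult_integral in E1. apply Rmult_integral in E2.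
  destruct E1; destruct E2; try lra. nra.
Qed.

Lemma RtoC_neq0 x : x <> 0 -> RtoC x <> RtoC 0.
Proof. intros H E. apply H. apply (f_equal fst) in E. exact E. Qed.

Lemma cpow_node (q a1 Y : R) (alpha : C) : 0 < q -> 0 < a1 ->
  cexp (alpha * RtoC (ln q))%C = RtoC Y ->
  forall j, cpow_abs (q ^ j * a1) alpha = (cexp (alpha * RtoC (ln a1)) * RtoC (Y ^ j))%C.
Proof.
  intros Hq Ha HY j. unfold cpow_abs.
  rewrite Rabs_pos_eq by (apply Rmult_le_pos; [apply pow_le|]; lra).
  induction j.
  - simpl. rewrite Rmult_1_l. rewrite Cmult_1_r. reflexivity.
  - replace (q ^ S j * a1) with (q * (q ^ j * a1)) by (simpl; ring).
    rewrite ln_mult by (try apply Rmult_lt_0_compat; try apply pow_lt; lra).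
    rewrite RtoC_plus, Cmult_plus_distr_l, cexp_plus, HY, IHj.
    destruct (cexp (alpha * RtoC (ln a1))%C) as [k1 k2].
    unfold Cmult, RtoC. simpl. f_equal; ring.
Qed.


Lemma sum_n_RtoC (v : nat -> R) N :
  @sum_n C_AbelianMonoid (fun j => RtoC (v j)) N = RtoC (sum_n v N).
Proof.
  induction N.
  - rewrite !sum_O. reflexivity.
  - rewrite !sum_Sn, IHN. simpl. unfold plus; simpl.
    rewrite RtoC_plus. reflexivity.
Qed.

Lemma is_series_RtoC (v : nat -> R) (S : R) :
  is_series v S -> is_series (K:=C_AbsRing) (V:=C_NormedModule) (fun j => RtoC (v j)) (RtoC S).
Proof.
  intro H. unfold is_series in *.
  apply (filterlim_ext (fun N => RtoC (sum_n v N))).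
  { intro N. symmetry. apply sum_n_RtoC. }
  eapply filterlim_comp. exact H.
  apply filterlim_locally. intro eps.
  apply (filter_imp (fun x => ball S eps x)).
  - intros x Hx. split. exact Hx. apply ball_center.
  - apply locally_ball.
Qed.

Lemma is_series_Cscal (K : C) (a : nat -> C) l :
  is_series (K:=C_AbsRing) (V:=C_NormedModule) a l ->
  is_series (K:=C_AbsRing) (V:=C_NormedModule) (fun j => (K * a j)%C) (K * l)%C.
Proof. intro H. apply (is_series_scal K a l H). Qed.

Lemma lim0_bound (u : nat -> R) C r : 0 <= r < 1 -> (forall N, Rabs (u N) <= C * r ^ N) ->
  is_lim_seq u 0.
Proof.
  intros Hr H. apply is_lim_seq_abs_0.
  assert (G : is_lim_seq (fun j => r ^ j) 0) by (apply is_lim_seq_geom; rewrite Rabs_pos_eq; lra).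
  apply (is_lim_seq_scal_l _ C) in G. simpl in G. replace (C * 0) with 0 in G by ring.
  apply (is_lim_seq_le_le (fun _ => 0) _ (fun N => C * r ^ N)); auto.
  intro n. split. apply Rabs_pos. apply H. apply is_lim_seq_const.
Qed.

Lemma sum_mono (a : nat -> R) : (forall j, 0 <= a j) ->
  forall k N, sum_f_R0 a N <= sum_f_R0 a (k + N).
Proof.
  intros Ha k N. induction k. simpl. lra.
  replace (S k + N)%nat with (S (k + N)) by lia. rewrite tech5. pose proof (Ha (S (k + N))). lra.
Qed.

Lemma series_ge_partial (a : nat -> R) S : (forall j, 0 <= a j) -> is_series a S ->
  forall N, sum_f_R0 a N <= S.
Proof.
  intros Ha HS N.
  assert (HL : is_lim_seq (sum_f_R0 a) S).
  { apply (is_lim_seq_ext (sum_n a)). intro n. apply sum_n_Reals. exact HS. }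
  apply (is_lim_seq_incr_n _ N) in HL.
  pose proof (is_lim_seq_le (fun _ => sum_f_R0 a N) (fun n => sum_f_R0 a (n + N)) (sum_f_R0 a N) S
    (fun n => sum_mono a Ha n N) (is_lim_seq_const _) HL). exact H.
Qed.

Lemma sum_ge_term (a : nat -> R) : (forall j, 0 <= a j) -> forall N, a N <= sum_f_R0 a N.
Proof.
  intros Ha N. destruct N. simpl. lra. rewrite tech5.
  pose proof (cond_pos_sum a N Ha). lra.
Qed.


Lemma node_alg (q s2 a1 t1 t0 r Q R p H0 H1 F lam x : R) :
  0 < q < 1 -> 0 < a1 -> 0 < Q -> s2 <> 0 -> x = q * Q * a1 ->
  t1 = / 2 * s2 * q / (1 - q) ->
  / 2 * s2 * q * a1 * r = / 2 * s2 * q * a1 + (1 - q) * t0 ->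
  / 2 * s2 * x * (x - a1) * ((H1 - H0) / ((1 - / q) * x)) + (t1 * x + t0) * H1 + lam * F = 0 ->
  lam * (r * R * p) * F =
  (/ 2 * s2 * q * a1 * r / (1 - q)) * (R * ((1 - q * Q) * p)) * H0
  - (/ 2 * s2 * q * a1 * r / (1 - q)) * (r * R * p) * H1.
Proof.
  intros Hq Ha HQ Hs Hx Ht Hr E.
  assert (Ht0 : t0 = (/ 2 * s2 * q * a1 * r - / 2 * s2 * q * a1) / (1 - q)) by (field_simplify_eq; lra).
  assert (HlF : lam * F = - (/ 2 * s2 * x * (x - a1) * ((H1 - H0) / ((1 - / q) * x)) + (t1 * x + t0) * H1)) by lra.
  replace (lam * (r * R * p) * F) with ((lam * F) * (r * R * p)) by ring.
  rewrite HlF. subst x t1 t0. field. repeat split; try lra; nra.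
Qed.

Lemma node0_alg (q s2 a1 t1 t0 r p H F lam : R) :
  0 < q < 1 -> 0 < a1 -> s2 <> 0 ->
  t1 = / 2 * s2 * q / (1 - q) ->
  / 2 * s2 * q * a1 * r = / 2 * s2 * q * a1 + (1 - q) * t0 ->
  (t1 * a1 + t0) * H + lam * F = 0 ->
  lam * p * F = - (/ 2 * s2 * q * a1 * r / (1 - q)) * p * H.
Proof.
  intros Hq Ha Hs Ht Hr E.
  assert (Ht0 : t0 = (/ 2 * s2 * q * a1 * r - / 2 * s2 * q * a1) / (1 - q)) by (field_simplify_eq; lra).
  assert (HlF : lam * F = - ((t1 * a1 + t0) * H)) by lra.
  replace (lam * p * F) with ((lam * F) * p) by ring.
  rewrite HlF. subst t1 t0. field. lra.
Qed.

Lemma err_bound a b c d A B C D : Rabs a <= A -> Rabs b <= B -> Rabs c <= C -> Rabs d <= D ->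
  Rabs (a * b - c * d) <= A * B + C * D.
Proof.
  intros. unfold Rminus. eapply Rle_trans. apply Rabs_triang. rewrite Rabs_Ropp, !Rabs_mult.
  apply Rplus_le_compat; apply Rmult_le_compat; auto using Rabs_pos.
Qed.


Theorem theorem5p18 (q s2 a1 t1 t0 : R) (alpha : C) :
  0 < q < 1 ->
  s2 <> 0 -> 0 < a1 -> t1 <> 0 ->
  t1 / (/ 2 * s2) = - / (1 - / q) ->
  q * ((1 - / q) * t0 - / 2 * s2 * a1) <> 0 ->
  0 < q * (/ q * (1 - (1 - / q) / a1 * (t0 / (/ 2 * s2)))) < 1 ->
  cexp (alpha * RtoC (ln q))%C =
    RtoC (- (/ q ^ 2 * (q * ((1 - / q) * t0 - / 2 * s2 * a1))) / (/ 2 * s2 * a1)) ->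
  exists (P : nat -> R -> R) (d : nat -> C),
    (forall n : nat,
       is_poly_deg (P n) n /\
       qEHT q (fun x => / 2 * s2 * x * (x - a1)) (fun x => t1 * x + t0)
            (lambda_n q s2 t1 n) (P n) /\
       d n <> RtoC 0) /\
    (forall m n : nat,
       qint_is q a1
         (fun x => (RtoC (P n x * P m x) *
                   (cpow_abs x alpha * RtoC (qpoch_inf (q * x / a1) q)))%C)
         (if Nat.eqb m n then d n else RtoC 0)).
Proof.
  intros Hq Hs2 Ha1 _ H5 _ H7 H8.
  assert (Hq0 : q <> 0) by lra.
  assert (Hq1 : 1 - / q <> 0).
  { intro H. assert (/ q = 1) by lra. assert (q = 1). rewrite <- (Rinv_inv q). rewrite H0. apply Rinv_1. lra. }
  assert (Ht1 : t1 = / 2 * s2 * q / (1 - q)).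
  { assert (E : t1 = t1 / (/ 2 * s2) * (/ 2 * s2)) by (field; auto).
    rewrite E, H5. field. repeat split; try lra; auto. }
  assert (Hl : forall n k, (k < n)%nat -> lambda_n q s2 t1 n <> lambda_n q s2 t1 k).
  { intros n k Hk E. apply (lam_inj q s2 t1 n k Hq Hs2 Ht1) in E. lia. }
  set (Y := - (/ q ^ 2 * (q * ((1 - / q) * t0 - / 2 * s2 * a1))) / (/ 2 * s2 * a1)) in H8.
  set (r := q * Y).
  assert (Hr : r = q * (/ q * (1 - (1 - / q) / a1 * (t0 / (/ 2 * s2))))).
  { unfold r, Y. field. repeat split; try lra; auto. }
  assert (Hr01 : 0 < r < 1) by (rewrite Hr; exact H7).
  assert (Hrel : / 2 * s2 * q * a1 * r = / 2 * s2 * q * a1 + (1 - q) * t0).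
  { rewrite Hr. field. repeat split; try lra; auto. }
  set (c := coef q s2 a1 t1 t0).
  set (P := fun n => pev (c n) n).
  set (pj := fun j => qpoch_inf (q ^ S j) q).
  assert (Hpnode : forall j, qpoch_inf (q * (q ^ j * a1) / a1) q = pj j).
  { intro j. unfold pj. f_equal. simpl. field. lra. }
  assert (Hpow01 : forall j, 0 <= q ^ j <= 1) by (intro j; apply pow_01; lra).
  assert (Hprec : forall j, pj j = (1 - q ^ S j) * pj (S j)).
  { intro j. unfold pj. rewrite (qp_inf_rec (q ^ S j) q Hq (Hpow01 (S j))).
    f_equal. f_equal. simpl. ring. }
  assert (Hpb : forall j, 0 <= pj j <= 1).
  { intro j. apply (qp_inf_bounds _ q Hq (Hpow01 (S j))). }
  set (w := fun j => r ^ j * pj j).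
  set (al := / 2 * s2 * q * a1 * r / (1 - q)).
  set (f := fun n j => P n (q ^ j * a1)).
  set (h := fun n j => Dq q (P n) (q ^ j * a1)).
  assert (Hxnz : forall j, q ^ j * a1 <> 0).
  { intro j. apply Rgt_not_eq. apply Rmult_lt_0_compat. apply pow_lt; lra. lra. }
  assert (Hxb : forall j, Rabs (q ^ j * a1) <= a1).
  { intro j. rewrite Rabs_pos_eq. pose proof (Hpow01 j). nra. left. apply Rmult_lt_0_compat. apply pow_lt; lra. lra. }
  assert (HE : forall n, qEHT q (fun x => / 2 * s2 * x * (x - a1)) (fun x => t1 * x + t0)
                   (lambda_n q s2 t1 n) (P n)).
  { intro n. apply P_qEHT. exact Hq. intros k Hk. apply Hl. exact Hk. }
  assert (Hn0 : forall n, lambda_n q s2 t1 n * w 0%nat * f n 0%nat = - al * w 0%nat * h n 0%nat).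
  { intro n. pose proof (HE n (q ^ 0 * a1)) as E. cbv beta in E. simpl pow in E.
    rewrite Rmult_1_l in E. replace (a1 - a1) with 0 in E by ring.
    rewrite Rmult_0_r, Rmult_0_l, Rplus_0_l in E.
    unfold w, f, h, al. simpl pow. rewrite !Rmult_1_l.
    apply (node0_alg q s2 a1 t1 t0 r); auto. }
  assert (HnS : forall n j, lambda_n q s2 t1 n * w (S j) * f n (S j)
                 = al * w j * h n j - al * w (S j) * h n (S j)).
  { intros n j. pose proof (HE n (q ^ S j * a1)) as E. cbv beta in E.
    rewrite Dq_outer in E by apply Hxnz.
    replace (/ q * (q ^ S j * a1)) with (q ^ j * a1) in E by (simpl; field; lra).
    unfold w, f, h, al. rewrite (Hprec j).
    replace (r ^ S j) with (r * r ^ j) by reflexivity.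
    replace (q ^ S j) with (q * q ^ j) by reflexivity.
    apply (node_alg q s2 a1 t1 t0 r (q ^ j) (r ^ j) (pj (S j)) _ _ _ _ (q ^ S j * a1)); auto.
    all: try (apply pow_lt; lra); try (simpl; ring). }
  assert (Hdiff : forall n j, f n (S j) = f n j - ((1 - q) * (q ^ j * a1)) * h n j).
  { intros n j. unfold f, h. rewrite Dq_outer by apply Hxnz.
    replace (q * (q ^ j * a1)) with (q ^ S j * a1) by (simpl; ring).
    assert (q ^ j <> 0) by (apply pow_nonzero; lra).
    field. repeat split; auto; lra. }
  assert (Hfb : forall n, exists M, forall j, Rabs (f n j) <= M).
  { intro n. apply (pev_bounded (c n) n a1 (fun j => q ^ j * a1)). exact Hxb. }
  assert (Hhb : forall n, exists M, forall j, Rabs (h n j) <= M).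
  { intro n. apply (Dq_bounded q (c n) n a1 (fun j => q ^ j * a1) Hq Hxnz Hxb). }
  assert (Hw : forall j, 0 <= w j <= r ^ j).
  { intro j. unfold w. pose proof (Hpb j). assert (0 <= r ^ j) by (apply pow_le; lra). split; nra. }
  set (v := fun n m j => w j * f n j * f m j).
  assert (Hvex : forall n m, ex_series (v n m)).
  { intros n m. destruct (Hfb n) as [M1 H1]. destruct (Hfb m) as [M2 H2].
    apply (@ex_series_le R_AbsRing R_CompleteNormedModule _ (fun j => (M1 * M2) * r ^ j)).
    - intro j. change (norm (v n m j)) with (Rabs (v n m j)). unfold v. rewrite !Rabs_mult.
      rewrite (Rabs_pos_eq (w j)) by apply Hw. pose proof (Hw j). pose proof (H1 j). pose proof (H2 j).
      pose proof (Rabs_pos (f n j)). pose proof (Rabs_pos (f m j)).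
      assert (Rabs (f n j) * Rabs (f m j) <= M1 * M2) by (apply Rmult_le_compat; auto).
      assert (0 <= Rabs (f n j) * Rabs (f m j)) by nra.
      nra.
    - apply (ex_series_ext (fun j => scal (M1 * M2) (r ^ j))). intro j. reflexivity.
      apply (@ex_series_scal R_AbsRing R_NormedModule (M1 * M2) (fun j => r ^ j)). apply ex_series_geom. rewrite Rabs_pos_eq; lra. }
  set (Ssum := fun n m => Series (v n m)).
  assert (HS : forall n m, is_series (v n m) (Ssum n m)) by (intros; apply Series_correct; auto).
  assert (Horth : forall n m, n <> m -> Ssum n m = 0).
  { intros n m Hnm.
    pose proof (orth_partial (f n) (f m) (h n) (h m) w (fun j => (1 - q) * (q ^ j * a1)) al
      (lambda_n q s2 t1 n) (lambda_n q s2 t1 m) (Hn0 n) (Hn0 m) (HnS n) (HnS m) (Hdiff n) (Hdiff m)) as HP.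
    set (dl := lambda_n q s2 t1 n - lambda_n q s2 t1 m) in HP.
    assert (HL0 : is_lim_seq (sum_f_R0 (v n m)) (Ssum n m)).
    { apply (is_lim_seq_ext (sum_n (v n m))). intro; apply sum_n_Reals. apply HS. }
    apply (is_lim_seq_scal_l _ dl) in HL0. simpl in HL0.
    assert (HL2 : is_lim_seq (fun N => dl * sum_f_R0 (v n m) N) 0).
    { apply (is_lim_seq_ext (fun N => - al * w N * (h n N * f m N - h m N * f n N))).
      { intro N. symmetry. apply HP. }
      destruct (Hfb n) as [Mf1 Hf1]. destruct (Hfb m) as [Mf2 Hf2].
      destruct (Hhb n) as [Mh1 Hh1]. destruct (Hhb m) as [Mh2 Hh2].
      apply (lim0_bound _ (Rabs al * (Mh1 * Mf2 + Mh2 * Mf1)) r). lra.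
      intro N. rewrite !Rabs_mult, Rabs_Ropp. rewrite (Rabs_pos_eq (w N)) by apply Hw.
      pose proof (err_bound _ _ _ _ _ _ _ _ (Hh1 N) (Hf2 N) (Hh2 N) (Hf1 N)) as EB.
      pose proof (Hw N). pose proof (Rabs_pos al).
      pose proof (Rabs_pos (h n N * f m N - h m N * f n N)).
      assert (Rabs al * w N <= Rabs al * r ^ N) by (apply Rmult_le_compat_l; lra).
      assert (0 <= Rabs al * w N) by nra.
      apply Rle_trans with (Rabs al * w N * (Mh1 * Mf2 + Mh2 * Mf1)).
      apply Rmult_le_compat_l; auto.
      assert (0 <= Mh1 * Mf2 + Mh2 * Mf1) by (eapply Rle_trans; [apply Rabs_pos| exact EB]).
      nra. }
    apply is_lim_seq_unique in HL0. apply is_lim_seq_unique in HL2.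
    rewrite HL0 in HL2. injection HL2 as HL2.
    apply Rmult_integral in HL2. destruct HL2 as [HL2|HL2]; auto.
    exfalso. apply Hnm. apply (lam_inj q s2 t1 n m Hq Hs2 Ht1). unfold dl in HL2. lra. }
  assert (Hv0 : forall n j, 0 <= v n n j).
  { intros n j. unfold v. pose proof (Hw j). assert (0 <= f n j * f n j) by nra. nra. }
  assert (Hpos : forall n, 0 < Ssum n n).
  { intro n.
    destruct (pow_lt_1_zero q ltac:(rewrite Rabs_pos_eq; lra) ((1 - q) / 2) ltac:(lra)) as [J HJ].
    assert (HB : 0 < q ^ J * a1) by (apply Rmult_lt_0_compat; [apply pow_lt|]; lra).
    assert (Hex : exists j, P n (q ^ j * (q ^ J * a1)) <> 0).
    { apply NNPP. intro Hne.
      assert (Hall : forall j, pev (c n) n (q ^ j * (q ^ J * a1)) = 0).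
      { intro j. apply NNPP. intro H0. apply Hne. exists j. exact H0. }
      pose proof (root_lemma q Hq n (c n) (q ^ J * a1) HB Hall n (le_n n)) as H0.
      unfold c in H0. rewrite coef_top in H0. lra. }
    destruct Hex as [j Hj]. set (j0 := (j + J)%nat).
    assert (Hfj : f n j0 <> 0).
    { unfold f, j0. replace (q ^ (j + J) * a1) with (q ^ j * (q ^ J * a1)) by (rewrite pow_add; ring). exact Hj. }
    assert (Hpj : 0 < pj j0).
    { destruct (qp_inf_bounds (q ^ S j0) q Hq (Hpow01 (S j0))) as [_ Hlow].
      specialize (HJ (S j0) ltac:(unfold j0; lia)). rewrite Rabs_pos_eq in HJ by (apply pow_le; lra).
      assert (E : 1 - q ^ S j0 / (1 - q) = ((1 - q) - q ^ S j0) / (1 - q)) by (field; lra).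
      rewrite E in Hlow. assert (0 < ((1 - q) - q ^ S j0) / (1 - q)) by (apply Rdiv_lt_0_compat; lra).
      unfold pj. lra. }
    assert (Hvj : 0 < v n n j0).
    { unfold v, w. assert (0 < r ^ j0) by (apply pow_lt; lra).
      assert (0 < f n j0 * f n j0) by (apply Rsqr_pos_lt in Hfj; exact Hfj).
      assert (0 < r ^ j0 * pj j0) by nra. nra. }
    pose proof (series_ge_partial _ _ (Hv0 n) (HS n n) j0).
    pose proof (sum_ge_term _ (Hv0 n) j0). lra. }
  remember (cexp (alpha * RtoC (ln a1))%C) as K eqn:HK.
  pose proof (cpow_node q a1 Y alpha ltac:(lra) Ha1 H8) as Hcp. rewrite <- HK in Hcp.
  exists P, (fun n => (RtoC ((1 - q) * a1) * (K * RtoC (Ssum n n)))%C).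
  split.
  - intro n. split; [|split].
    + exists (c n). split. unfold c; rewrite coef_top; lra. intro x; reflexivity.
    + apply HE.
    + apply Cmult_neq_0. apply RtoC_neq0. apply Rgt_not_eq. apply Rmult_lt_0_compat; lra.
      apply Cmult_neq_0. rewrite HK. apply cexp_neq0. apply RtoC_neq0. pose proof (Hpos n). lra.
  - intros m n. exists (K * RtoC (Ssum n m))%C. split.
    + apply (is_series_ext (fun j => (K * RtoC (v n m j))%C)).
      * intro j. cbv beta. rewrite Hcp, Hpnode. unfold v, w, f, r. rewrite Rpow_mult_distr.
        destruct K as [k1 k2]. unfold Cmult, RtoC. simpl. f_equal; ring.
      * apply is_series_Cscal. apply is_series_RtoC. apply HS.
    + destruct (Nat.eqb m n) eqn:Emn.
      * apply Nat.eqb_eq in Emn. subst m. reflexivity.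
      * apply Nat.eqb_neq in Emn. rewrite (Horth n m) by auto.
        destruct K as [k1 k2]. unfold Cmult, RtoC. simpl. f_equal; ring.
Qed.
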